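(* Let $G$ be a graph, $\mathcal R=\{G_v: v\in V(G)\}$ a family of pairwise vertex-disjoint graphs, and let $S$ be a Grundy dominating sequence of $G\hookleftarrow\mathcal R$. Then there exists a Grundy dominating sequence $S'$ of $G\hookleftarrow\mathcal R$ such that, for every $v\in V(G)$ with $\widehat{S'}\cap V(G_v)\neq\emptyset$ and $\ell_{S'}(v)\in I_{S'}$, it holds that (1) $f_{S'}(w)\in V(G_v)$ for all $w\in V(G_v)$, and (2) $|\widehat{S'}\cap V(G_v)|=\gamma_{gr}(G_v)$.
   Context: All graphs are finite and simple; $N[v]$ denotes the closed neighborhood. The $X$-join product $G\hookleftarrow \mathcal R$ has vertex set $\bigcup_{v\in V(G)}V(G_v)$, the edges of all $G_v$, and all edges between $V(G_u)$ and $V(G_v)$ whenever $uv\in E(G)$. For a sequence $S=(v_1,\dots,v_k)$ of distinct vertices, $\widehat S=\{v_1,\dots,v_k\}$, $|S|=k$, and $PN_S(v_i)=N[v_i]\setminus\bigcup_{j<i}N[v_j]$. $S$ is a legal dominating sequence if $\widehat S$ is dominating and all $PN_S(v_i)\neq\emptyset$; a Grundy dominating sequence is a legal dominating sequence of maximum length, this length being $\gamma_{gr}$. For a legal dominating sequence $S$, the footprinter $f_S(x)$ of a vertex $x$ is the unique $v\in\widehat S$ with $x\in PN_S(v)$, and $I_S=\{v: f_S(v)=v\}$. For $v\in V(G)$ with $\widehat S\cap V(G_v)\neq\emptyset$, $\ell_S(v)$ denotes the vertex of $\widehat S\cap V(G_v)$ appearing earliest in $S$. *)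

(* Defs.v *)
From mathcomp Require Import all_boot.
Set Implicit Arguments. Unset Strict Implicit. Unset Printing Implicit Defensive.

Definition simple_graph (T : finType) (e : rel T) : Prop :=
  symmetric e /\ irreflexive e.

Definition cnbhd (T : finType) (e : rel T) (x : T) : {set T} :=
  [set y | (y == x) || e x y].

(* every vertex has a nonempty private neighbourhood w.r.t. D, the union of
   closed neighbourhoods of the earlier vertices *)
Fixpoint legal_aux (T : finType) (e : rel T) (D : {set T}) (s : seq T) : bool :=
  match s with
  | [::] => true
  | x :: s' => (cnbhd e x :\: D != set0) && legal_aux e (D :|: cnbhd e x) s'
  end.

Definition legal_dom (T : finType) (e : rel T) (s : seq T) : bool :=
  [&& uniq s, legal_aux e set0 s & \bigcup_(x <- s) cnbhd e x == setT].

Definition grundy_seq (T : finType) (e : rel T) (s : seq T) : Prop :=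
  legal_dom e s /\ forall t, legal_dom e t -> size t <= size s.

(* Grundy domination number: maximum length of a legal dominating sequence
   (such sequences are duplicate-free, hence of length <= #|T|). *)
Definition gamma_gr (T : finType) (e : rel T) : nat :=
  \max_(n < #|T|.+1 | [exists t : n.-tuple T, legal_dom e t]) n.

(* footprinter f_S(x): the first vertex of S whose closed neighbourhood
   contains x (the unique v in \hat S with x in PN_S(v)). *)
Definition footprinter (T : finType) (e : rel T) (s : seq T) (x : T) : T :=
  nth x s (find (fun y => x \in cnbhd e y) s).

Definition xjoin (V : finType) (e : rel V) (T : V -> finType)
  (eR : forall v, rel (T v)) : rel {v : V & T v} :=
  fun a b => if tag a == tag b then eR (tag a) (tagged a) (tagged_as a b)
             else e (tag a) (tag b).

Definition ell (V : finType) (T : V -> finType) (s : seq {v : V & T v}) (v : V)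
  : option {v : V & T v} :=
  ohead [seq a <- s | tag a == v].

(* Main.v *)
Require Import Defs.
From mathcomp Require Import all_boot.
Set Implicit Arguments. Unset Strict Implicit. Unset Printing Implicit Defensive.

Lemma legal_aux_cat (G : finType) (E : rel G) D p q :
  legal_aux E D (p ++ q) =
  legal_aux E D p && legal_aux E (D :|: \bigcup_(x <- p) cnbhd E x) q.
Proof.
elim: p D => [|x p IH] D /=; first by rewrite big_nil setU0.
by rewrite IH big_cons setUA andbA.
Qed.

Lemma legal_mono (G : finType) (E : rel G) (P : pred G) q D D' :
  legal_aux E D q ->
  (forall q1 x q2, q = q1 ++ x :: q2 -> P x ->
     cnbhd E x :&: D' \subset D :|: \bigcup_(y <- q1) cnbhd E y) ->
  legal_aux E D' (filter P q).
Proof.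
elim: q D D' => [|x q IH] D D' //= /andP[hx hq] H.
case: ifP => Px /=.
- apply/andP; split.
    have := H [::] x q erefl Px; rewrite big_nil setU0 => sub.
    case/set0Pn: hx => z; rewrite inE => /andP[zD zN].
    apply/set0Pn; exists z; rewrite inE zN andbT; apply: contra zD => zD'.
    by apply: (subsetP sub); rewrite inE zN zD'.
  apply: IH hq _ => q1 y q2 Eq Py.
  have := H (x :: q1) y q2 (congr1 (cons x) Eq) Py; rewrite big_cons => s.
  apply/subsetP => z; rewrite !inE => /andP[zy /orP[zD'|zx]].
    by have := subsetP s z; rewrite !inE zy zD' /= => /(_ isT) /or3P[]->; rewrite ?orbT.
  by rewrite zx orbT.
- apply: IH hq _ => q1 y q2 Eq Py.
  have := H (x :: q1) y q2 (congr1 (cons x) Eq) Py; rewrite big_cons => s.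
  by apply: (subset_trans s); apply/subsetP => z; rewrite !inE => /or3P[]->; rewrite ?orbT.
Qed.

Definition Dom (G : finType) (E : rel G) (s : seq G) := \bigcup_(x <- s) cnbhd E x.

Lemma DomP (G : finType) (E : rel G) s z :
  reflect (exists2 x, x \in s & z \in cnbhd E x) (z \in Dom E s).
Proof.
rewrite /Dom; elim: s => [|x s IH]; first by rewrite big_nil inE; constructor => -[].
rewrite big_cons inE; apply: (iffP orP).
  case=> [h|/IH [y ys h]]; first by exists x => //; rewrite inE eqxx.
  by exists y; rewrite // inE ys orbT.
case=> y; rewrite inE => /orP[/eqP->|ys] h; first by left.
by right; apply/IH; exists y.
Qed.

Lemma Dom_cat (G : finType) (E : rel G) p q : Dom E (p ++ q) = Dom E p :|: Dom E q.
Proof. by rewrite /Dom big_cat. Qed.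

Lemma Dom_cons (G : finType) (E : rel G) x q : Dom E (x :: q) = cnbhd E x :|: Dom E q.
Proof. by rewrite /Dom big_cons. Qed.

Lemma cnbhd_self (G : finType) (E : rel G) x : x \in cnbhd E x.
Proof. by rewrite inE eqxx. Qed.

Lemma has_Dom (G : finType) (E : rel G) s z :
  has (fun y => z \in cnbhd E y) s = (z \in Dom E s).
Proof. apply/hasP/DomP; case=> y ? ?; by exists y. Qed.

Lemma fp_prefix (G : finType) (E : rel G) p q z : z \in Dom E p ->
  footprinter E (p ++ q) z = footprinter E p z /\ footprinter E p z \in p /\
  z \in cnbhd E (footprinter E p z).
Proof.
rewrite -has_Dom => h; rewrite /footprinter find_cat h nth_cat -has_find h.
split=> //; split; first by rewrite mem_nth // -has_find.
exact: (nth_find z h).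
Qed.

Lemma fp_mem (G : finType) (E : rel G) s z : z \in Dom E s ->
  footprinter E s z \in s /\ z \in cnbhd E (footprinter E s z).
Proof. by move=> h; have [_ ?] := fp_prefix [::] h. Qed.

Lemma fp_self (G : finType) (E : rel G) p q z : z \notin Dom E p ->
  footprinter E (p ++ z :: q) z = z.
Proof.
rewrite -has_Dom => h; rewrite /footprinter find_cat (negbTE h) nth_cat ltnNge leq_addr /=.
by rewrite addKn /= cnbhd_self.
Qed.

Lemma fp_self_inv (G : finType) (E : rel G) p q z : z \notin p ->
  footprinter E (p ++ z :: q) z = z -> z \notin Dom E p.
Proof.
move=> zp h; apply/negP => /(fp_prefix (z :: q)) [e1 [e2 _]].
by move: zp; rewrite -{1}h e1 e2.
Qed.

Lemma legal_extend (G : finType) (E : rel G) s : uniq s -> legal_aux E set0 s ->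
  exists t, legal_dom E (s ++ t).
Proof.
have [n] := ubnP #|~: Dom E s|; elim: n s => // n IH s hn u l.
case: (pickP [pred z | z \notin Dom E s]) => [z /= hz | h0]; last first.
  exists [::]; rewrite cats0 /legal_dom u l /=; apply/eqP/setP => x.
  by have := h0 x; rewrite /= inE; move/negbFE.
have zs : z \notin s by apply: contra hz => zs; apply/DomP; exists z => //; exact: cnbhd_self.
have h1 : #|~: Dom E (s ++ [:: z])| < n.
  rewrite ltnS in hn; apply: (leq_trans _ hn); apply: proper_card; apply/properP; split.
    by apply/subsetP => x; rewrite !inE Dom_cat inE negb_or => /andP[].
  exists z; first by rewrite !inE.
  by rewrite in_setC negbK Dom_cat Dom_cons !in_setU cnbhd_self orbT.
have h2 : uniq (s ++ [:: z]) by rewrite cat_uniq u /= orbF zs.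
have h3 : legal_aux E set0 (s ++ [:: z]).
  rewrite legal_aux_cat l /= andbT set0U; apply/set0Pn; exists z.
  by rewrite inE cnbhd_self andbT.
have [t ht] := IH (s ++ [:: z]) h1 h2 h3.
by exists (z :: t); rewrite -catA in ht.
Qed.

Lemma card_set_seq (G : finType) (P : pred G) s : uniq s ->
  #|[set x in s | P x]| = count P s.
Proof.
rewrite -size_filter; move/(filter_uniq P)/card_uniqP <-; apply: eq_card => x.
by rewrite inE mem_filter andbC.
Qed.

Lemma I_nonadj (G : finType) (E : rel G) S x y : uniq S -> x \in S -> y \in S ->
  x != y -> footprinter E S x = x -> footprinter E S y = y ->
  x \in cnbhd E y -> y \in cnbhd E x -> False.
Proof.
move=> u xS yS; move: u xS; case/splitPr: yS => p r u.
rewrite mem_cat inE => /orP[xp|/orP[/eqP->|xr]].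
- move=> _ _ fy _ yx; have yD : y \in Dom E p by apply/DomP; exists x.
  have [e1 [e2 _]] := fp_prefix (y :: r) yD.
  by move: u; rewrite cat_uniq /= -fy e1 e2 /= andbF.
- by rewrite eqxx.
- move: u; case/splitPr: xr => r1 r2 u _ fx _ xy _.
  have xD : x \in Dom E (p ++ y :: r1) by apply/DomP; exists y; rewrite // mem_cat inE eqxx orbT.
  have [e1 [e2 _]] := fp_prefix (x :: r2) xD.
  move: u fx; rewrite -cat_cons catA e1 => u fx.
  by move: u; rewrite cat_uniq /= -fx e2 /= andbF.
Qed.

Lemma fp_first (G : finType) (E : rel G) p q x z : z \notin Dom E p ->
  z \in cnbhd E x -> footprinter E (p ++ x :: q) z = x.
Proof.
rewrite -has_Dom => h zx; rewrite /footprinter find_cat (negbTE h) nth_cat ltnNge leq_addr /=.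
by rewrite addKn /= zx.
Qed.

Lemma XF1 (V : finType) (e : rel V) (T : V -> finType) (eR : forall v, rel (T v))
  (x y : {v : V & T v}) : tag x != tag y ->
  (y \in cnbhd (xjoin e eR) x) = e (tag x) (tag y).
Proof.
move=> h; have yx : y != x by apply: contraNneq h => ->.
by rewrite inE (negbTE yx) /= /xjoin (negbTE h).
Qed.

Lemma XF2 (V : finType) (e : rel V) (T : V -> finType) (eR : forall v, rel (T v))
  v (x y : T v) :
  (Tagged T y \in cnbhd (xjoin e eR) (Tagged T x)) = (y \in cnbhd (eR v) x).
Proof. by rewrite !inE eq_Tagged /= /xjoin /= eqxx tagged_asE. Qed.

Lemma XF3 (V : finType) (e : rel V) (T : V -> finType) (eR : forall v, rel (T v))
  (x y : {v : V & T v}) : y \in cnbhd (xjoin e eR) x ->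
  tag y = tag x \/ e (tag x) (tag y).
Proof.
case: (eqVneq (tag x) (tag y)) => [->|h]; first by left.
by rewrite XF1 // => ?; right.
Qed.

Lemma tagged_asK (V : finType) (T : V -> finType) v (a0 : T v) (x : {v : V & T v}) :
  tag x = v -> Tagged T (tagged_as (Tagged T a0) x) = x.
Proof. by case: x => vx x0 /= h; subst vx; rewrite tagged_asE. Qed.

Lemma inj_legal (V : finType) (e : rel V) (T : V -> finType) (eR : forall v, rel (T v))
  v (Bv : seq (T v)) C (D : {set {v : V & T v}}) : legal_aux (eR v) C Bv ->
  (forall y, Tagged T y \in D -> y \in C) ->
  legal_aux (xjoin e eR) D (map (Tagged T) Bv).
Proof.
elim: Bv C D => [|y B IH] C D //= /andP[h1 h2] H; apply/andP; split.
  case/set0Pn: h1 => z; rewrite inE => /andP[zC zy]; apply/set0Pn; exists (Tagged T z).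
  by rewrite inE XF2 zy andbT; apply: contra zC; apply: H.
apply: IH h2 _ => y'; rewrite in_setU; case/setUP => [/H->//|]; rewrite XF2 => ->; exact: orbT.
Qed.

Lemma proj_legal (V : finType) (e : rel V) (T : V -> finType) (eR : forall v, rel (T v))
  v (a0 : T v) q (C : {set T v}) (D : {set {v : V & T v}}) : legal_aux (xjoin e eR) D q ->
  (forall y, y \in C -> Tagged T y \in D) ->
  (forall z : {v : V & T v}, e v (tag z) -> z \in D) ->
  legal_aux (eR v) C
    (map (fun x => tagged_as (Tagged T a0) x) (filter (fun x => tag x == v) q)).
Proof.
elim: q C D => [|x q IH] C D //= /andP[h1 h2] H1 H2.
case: ifP => hx /=; last first.
  apply: IH h2 _ _ => [y /H1|z /H2]; rewrite in_setU => ->//.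
case: x hx h1 h2 => vx x0 /= /eqP hx; subst vx; rewrite tagged_asE => h1 h2.
apply/andP; split.
  case/set0Pn: h1 => z; rewrite inE => /andP[zD zx].
  case: (eqVneq (tag z) v) => hz; last first.
    by move: zD; rewrite H2 //; move: zx; rewrite XF1 //= eq_sym.
  apply/set0Pn; exists (tagged_as (Tagged T a0) z).
  rewrite inE -(XF2 e) tagged_asK // zx andbT; apply: contra zD => /H1.
  by rewrite tagged_asK.
apply: IH h2 _ _ => [y|z /H2]; rewrite !in_setU; last by move->.
by case/orP=> [/H1->//|h]; rewrite XF2 h orbT.
Qed.

Lemma case1 (V : finType) (e : rel V) (He : simple_graph e)
  (T : V -> finType) (eR : forall v, rel (T v))
  (S : seq {v : V & T v}) v a :
  grundy_seq (xjoin e eR) S -> ell S v = Some a ->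
  footprinter (xjoin e eR) S a = a ->
  (forall w : {v : V & T v}, tag w = v -> tag (footprinter (xjoin e eR) S w) = v) ->
  #|[set x in S | tag x == v]| = gamma_gr (eR v).
Proof.
move=> [hS hmax] hell hfa hfw.
have /and3P[uS lS dS] := hS.
have : a \in filter (fun x => tag x == v) S.
  by move: hell; rewrite /ell; case: filter => //= ? ? [->]; rewrite mem_head.
rewrite mem_filter => /andP[/eqP ta aS].
case: a ta hell hfa aS => va a0 /= ta; subst va => hell hfa aS.
rewrite card_set_seq //.
have DS : forall z, z \in Dom (xjoin e eR) S.
  by move=> z; rewrite /Dom (eqP dS) inE.
move: uS lS dS hell hfa hfw hmax DS; case/splitPr: aS => p r uS lS dS hell hfa hfw hmax DS.
set a := Tagged T a0.
have ap : a \notin p by move: uS; rewrite uniq_catC /= mem_cat negb_or => /andP[/andP[_ ->]].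
have hp : ~~ has (fun x => tag x == v) p.
  apply/negP => hp; move: hell; rewrite /ell filter_cat.
  have : filter (fun x => tag x == v) p != [::] by rewrite -has_filter.
  have sub : forall y, y \in filter (fun x => tag x == v) p -> y \in p.
    by move=> y; rewrite mem_filter => /andP[].
  case: (filter _ p) sub => //= y l sub _ [ya].
  by have := sub y (mem_head y l); rewrite ya; apply/negP.
have fp0 : filter (fun x => tag x == v) p = [::].
  by apply/eqP; rewrite -[_ == _]negbK -has_filter.
have aDp : a \notin Dom (xjoin e eR) p by apply: fp_self_inv hfa.
have Dp : forall z, tag z = v -> z \notin Dom (xjoin e eR) p.
  move=> z tz; apply/negP => /DomP [y yp zy].
  have ty : tag y != v by apply: contraNN hp => ty; apply/hasP; exists y.
  move: zy; rewrite XF1 ?tz // => eyv.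
  by move: aDp; apply/negP/negPn/DomP; exists y; rewrite // XF1.
have Na : forall z, e v (tag z) -> z \in cnbhd (xjoin e eR) a.
  move=> z ez; rewrite XF1 //=; apply: contraTneq ez => <-.
  by have [_ ->] := He.
have cntE : count (fun x => tag x == v) (p ++ a :: r) =
    (count (fun x => tag x == v) r).+1.
  by rewrite count_cat /= eqxx; move: hp; rewrite has_count -eqn0Ngt => /eqP->.
rewrite cntE.
have uar : uniq (a :: r) by move: uS; rewrite cat_uniq => /and3P[].
have lr : legal_aux (xjoin e eR) ((set0 :|: Dom (xjoin e eR) p) :|: cnbhd (xjoin e eR) a) r.
  by move: lS; rewrite legal_aux_cat => /andP[_] /= /andP[_].
pose proj := fun x : {v : V & T v} => tagged_as a x.
have le1 : (count (fun x => tag x == v) r).+1 <= gamma_gr (eR v).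
  pose A' := map proj (filter (fun x => tag x == v) (a :: r)).
  have szA : size A' = (count (fun x => tag x == v) r).+1.
    by rewrite size_map /= eqxx /= size_filter.
  have uA : uniq A'.
    rewrite map_inj_in_uniq ?filter_uniq // => x y.
    rewrite !mem_filter => /andP[/eqP tx _] /andP[/eqP ty _] h.
    by rewrite -(tagged_asK a0 tx) -(tagged_asK a0 ty); move: h; rewrite /proj /a => ->.
  have hA : legal_dom (eR v) A'.
    apply/and3P; split => //.
      rewrite /A' /= eqxx /= {1}/proj tagged_asE /=; apply/andP; split.
        by apply/set0Pn; exists a0; rewrite setD0 cnbhd_self.
      apply: proj_legal lr _ _ => [y|z /Na]; rewrite !in_setU; last by move->; rewrite orbT.
      by case/orP=> [|h]; [rewrite inE | rewrite XF2; move: h; rewrite /proj /a tagged_asE => ->; rewrite orbT].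
    apply/eqP/setP => y; rewrite inE; apply/(DomP (eR v)).
    have [fS zf] := fp_mem (DS (Tagged T y)).
    have tf := hfw (Tagged T y) (erefl v).
    exists (proj (footprinter (xjoin e eR) (p ++ a :: r) (Tagged T y))).
      apply: map_f; rewrite mem_filter tf eqxx /=.
      move: fS; rewrite mem_cat => /orP[fp|//].
      by move/hasPn: hp => /(_ _ fp); rewrite tf eqxx.
    by rewrite -(XF2 e) /proj tagged_asK.
  have sz : size A' < #|T v|.+1 by rewrite ltnS -(card_uniqP uA) max_card.
  rewrite -szA /gamma_gr.
  apply: (leq_trans _ (@leq_bigmax_cond _ (fun n : 'I_#|T v|.+1 => [exists t : n.-tuple (T v), legal_dom (eR v) t]) (fun n => nat_of_ord n) (Ordinal sz) _)) => //.
  by apply/existsP; exists (in_tuple A').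
apply/eqP; rewrite eqn_leq le1 /= leqNgt; apply/negP => lt.
pose P := fun n : 'I_#|T v|.+1 => [exists t : n.-tuple (T v), legal_dom (eR v) t].
have [Bv [hB szB]] : exists Bv : seq (T v), legal_dom (eR v) Bv /\ size Bv = gamma_gr (eR v).
  case: (pickP P) => [i0 Pi0|P0]; last first.
    by move: lt; rewrite /gamma_gr big_pred0.
  have [i Pi eqm] := @eq_bigmax_cond _ P (fun n => nat_of_ord n) (ltac:(by apply/card_gt0P; exists i0)).
  have gi : gamma_gr (eR v) = i by exact: eqm.
  case/existsP: Pi => t ht; exists (val t); split => //.
  by rewrite size_tuple gi.
have /and3P[uB lB dB] := hB.
pose B := map (Tagged T) Bv.
pose r' := filter (fun x => tag x != v) r.
have tB : forall x, x \in B -> tag x = v by move=> x /mapP[y _ ->].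
have tp : forall x, x \in p -> tag x != v by move=> x xp; apply: contraNN hp => h; apply/hasP; exists x.
have fpp : filter (fun x => tag x != v) p = p by apply/all_filterP/allP => x /tp.
have DBv : forall y : T v, y \in Dom (eR v) Bv by move=> y; rewrite /Dom (eqP dB) inE.
have hS' : legal_dom (xjoin e eR) (p ++ B ++ r').
  apply/and3P; split.
  - rewrite uniq_catCA cat_uniq; apply/and3P; split.
    + by rewrite map_inj_uniq // => x y h; exact: eq_from_Tagged h.
    + apply/hasPn => x; rewrite mem_cat => /orP[/tp|]; last rewrite mem_filter => /andP[].
        by move=> tx; apply: contraNN tx => xB; rewrite (tB x xB).
      by move=> tx _; apply: contraNN tx => xB; rewrite (tB x xB).
    + have -> : p ++ r' = filter (fun x => tag x != v) (p ++ a :: r).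
        by rewrite filter_cat fpp /= eqxx.
      exact: filter_uniq.
  - rewrite legal_aux_cat legal_aux_cat; apply/and3P; split.
    + by move: lS; rewrite legal_aux_cat => /andP[].
    + apply: inj_legal lB _ => y; rewrite in_setU in_set0 /= => h.
      by move: (Dp (Tagged T y) (erefl v)); rewrite -/(Dom _ _) h.
    + apply: legal_mono lr _ => q1 x q2 er tx; apply/subsetP => z.
      rewrite in_setI => /andP[zx]; rewrite !in_setU in_set0 /= => /orP[->|zB]//.
      case/DomP: zB => y yB zy; have ty := tB y yB.
      case: (XF3 zy) => [tz|]; last by rewrite ty => /Na ->; rewrite orbT.
      rewrite ty in tz.
      have : z \in Dom (xjoin e eR) (p ++ a :: q1).
        apply/negPn/negP => nz.
        have := hfw z tz; rewrite er -cat_cons catA fp_first // => tx'.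
        by move: tx; rewrite tx' eqxx.
      by rewrite Dom_cat Dom_cons !in_setU => /or3P[]->; rewrite ?orbT.
  - apply/eqP/setP => z; rewrite inE; apply/(DomP (xjoin e eR)).
    case/DomP: (DS z) => y yS zy.
    case: (eqVneq (tag y) v) => ty; last first.
      exists y => //; move: yS; rewrite !mem_cat inE => /or3P[->//|/eqP ya|yr].
        by move: ty; rewrite ya eqxx.
      by rewrite mem_filter ty yr !orbT.
    case: (eqVneq (tag z) v) => tz.
      case/DomP: (DBv (tagged_as a z)) => y'' yB zy''.
      exists (Tagged T y''); first by rewrite !mem_cat map_f ?orbT.
      by rewrite -(tagged_asK a0 tz) XF2.
    case/DomP: (DBv a0) => y'' yB _.
    exists (Tagged T y''); first by rewrite !mem_cat map_f ?orbT.
    rewrite XF1 /=; last by rewrite eq_sym.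
    by move: zy; rewrite XF1 ty // eq_sym.
have := hmax _ hS'.
rewrite !size_cat /= size_map size_filter szB.
have := count_predC (fun x => tag x == v) r.
move: lt; rewrite /=.
set c1 := count _ r; set c2 := count _ r; set g := gamma_gr _.
move=> lt1 hc; rewrite -hc leq_add2l -addSn leq_add2r => h.
by move: (leq_trans lt1 h); rewrite ltnn.
Qed.

Definition isI (V : finType) (e : rel V) (T : V -> finType) (eR : forall v, rel (T v))
  (S : seq {v : V & T v}) (u : V) : bool :=
  if ell S u is Some c then footprinter (xjoin e eR) S c == c else false.

Definition Phi (V : finType) (e : rel V) (T : V -> finType) (eR : forall v, rel (T v))
  (S : seq {v : V & T v}) : nat := count (fun x => isI e eR S (tag x)) S.

Lemma ell_mem (V : finType) (T : V -> finType) (S : seq {v : V & T v}) u c :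
  ell S u = Some c -> c \in S /\ tag c = u.
Proof.
rewrite /ell; have : forall y, y \in filter (fun x => tag x == u) S -> y \in S /\ tag y = u.
  by move=> y; rewrite mem_filter => /andP[/eqP].
case: filter => //= y l h [<-]; apply: h; exact: mem_head.
Qed.

Lemma ell_prefix (V : finType) (T : V -> finType) (p s : seq {v : V & T v}) u :
  has (fun x => tag x == u) p -> ell (p ++ s) u = ell p u.
Proof. by rewrite /ell filter_cat has_filter; case: filter. Qed.

Lemma ell_swap (V : finType) (T : V -> finType) (p q : seq {v : V & T v}) b w u :
  tag b != u -> tag w != u -> ell (p ++ b :: q) u = ell (p ++ w :: q) u.
Proof. by move=> hb hw; rewrite /ell !filter_cat /= (negbTE hb) (negbTE hw). Qed.

Lemma case2 (V : finType) (e : rel V) (He : simple_graph e)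
  (T : V -> finType) (eR : forall v, rel (T v))
  (S : seq {v : V & T v}) v a w :
  grundy_seq (xjoin e eR) S -> ell S v = Some a ->
  footprinter (xjoin e eR) S a = a ->
  tag w = v -> tag (footprinter (xjoin e eR) S w) != v ->
  exists S2, grundy_seq (xjoin e eR) S2 /\ Phi e eR S < Phi e eR S2.
Proof.
move=> [hS hmax] hell hfa tw hb.
have /and3P[uS lS dS] := hS.
have DS : forall z, z \in Dom (xjoin e eR) S.
  by move=> z; rewrite /Dom (eqP dS) inE.
have [aS ta] := ell_mem hell.
have [bS wb] := fp_mem (DS w).
move: hb bS wb; set b := footprinter _ S w => hb bS wb.
have ebv : e (tag b) v by move: wb; rewrite XF1 ?tw // eq_sym -tw.
have evb : e v (tag b) by have [hsym _] := He; rewrite hsym.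
have irr : forall u, e u u = false by have [_ hi] := He.
have Na : forall z, e v (tag z) -> z \in cnbhd (xjoin e eR) a.
  move=> z ez; rewrite XF1 ta //; apply: contraTneq ez => <-; by rewrite irr.
have noI : forall u, e v u -> isI e eR S u = false.
  move=> u evu; rewrite /isI; case hc: (ell S u) => [c|] //.
  have [cS tc] := ell_mem hc; apply/negP => /eqP fc.
  have ac : a != c by apply: contraTneq evu => ac'; rewrite -tc -ac' ta irr.
  apply: (I_nonadj uS aS cS ac hfa fc).
    by rewrite XF1 tc ta //; [have [-> _] := He | rewrite eq_sym; apply: contraTneq evu => ->; rewrite irr].
  by rewrite XF1 tc ta //; apply: contraTneq evu => ->; rewrite irr.
have fw : footprinter (xjoin e eR) S w = b by [].
clearbody b.
move: hS hmax uS lS dS DS hell aS hfa noI fw.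
case/splitPr: bS => p q hS hmax uS lS dS DS hell aS hfa noI fw.
have bp : b \notin p.
  by move: uS; rewrite uniq_catC /= mem_cat negb_or => /andP[/andP[_ ->]].
have wDp : w \notin Dom (xjoin e eR) p.
  apply/negP => h; have [e1 [e2 _]] := fp_prefix (b :: q) h.
  by move: bp; rewrite -fw e1 e2.
have ap : a \in p.
  have aD : a \in Dom (xjoin e eR) (p ++ [:: b]).
    apply/DomP; exists b; first by rewrite mem_cat mem_head orbT.
    by rewrite XF1 ta // ebv.
  have [e1 [e2 _]] := fp_prefix q aD.
  rewrite -catA /= hfa in e1; rewrite -e1 mem_cat inE in e2.
  case/orP: e2 => // /eqP ab; by move: hb; rewrite -ab ta eqxx.
have Nw : forall z, z \in cnbhd (xjoin e eR) w ->
    (z \in Dom (xjoin e eR) p) || (z \in cnbhd (xjoin e eR) b).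
  move=> z zw; case: (XF3 zw) => [tz|ez].
    by rewrite XF1 tz tw ?ebv ?orbT.
  by rewrite tw in ez; apply/orP; left; apply/DomP; exists a => //; apply: Na.
have wS : w \notin p ++ b :: q.
  rewrite mem_cat inE; apply/negP => /or3P[wp|/eqP wb'|wq].
  - by move/negP: wDp; apply; apply/DomP; exists w => //; exact: cnbhd_self.
  - by move: hb; rewrite -wb' tw eqxx.
  - move: lS; case/splitPr: wq => q1 q2.
    rewrite -cat_cons catA legal_aux_cat => /andP[_] /= /andP[h _].
    case/set0Pn: h => z; rewrite in_setD in_setU in_set0 /= => /andP[zn /Nw zw].
    move: zn; rewrite big_cat big_cons !in_setU.
    by case/orP: zw => ->; rewrite ?orbT.
pose S2 := p ++ w :: q.
have lS2 : legal_aux (xjoin e eR) set0 S2.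
  rewrite legal_aux_cat; apply/andP; split; first by move: lS; rewrite legal_aux_cat => /andP[].
  rewrite /=; apply/andP; split.
    by apply/set0Pn; exists w; rewrite in_setD cnbhd_self andbT in_setU in_set0 /=.
  have lq : legal_aux (xjoin e eR) ((set0 :|: Dom (xjoin e eR) p) :|: cnbhd (xjoin e eR) b) q.
    by move: lS; rewrite legal_aux_cat => /andP[_] /= /andP[_].
  have := legal_mono (P := predT) lq; rewrite filter_predT; apply => q1 x q2 _ _.
  apply/subsetP => z; rewrite in_setI => /andP[_]; rewrite !in_setU in_set0 /=.
  by case/orP=> [->//|/Nw /orP[]->]; rewrite ?orbT.
have uS2 : uniq S2.
  move: uS; rewrite /S2 -cat1s uniq_catCA /= => /andP[_ u].
  rewrite -cat1s uniq_catCA /= u andbT.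
  by move: wS; rewrite !mem_cat inE !negb_or => /and3P[-> _ ->].
have [t ht] := legal_extend uS2 lS2.
have t0 : t = [::].
  by apply/size0nil; have := hmax _ ht; rewrite !size_cat /= addnS -addSn -[X in _ <= X]addn0 leq_add2l leqn0 => /eqP.
rewrite t0 cats0 in ht.
have gS2 : grundy_seq (xjoin e eR) S2.
  split => // t' /hmax; by rewrite !size_cat.
exists S2; split => //.
have hpv : has (fun x => tag x == v) p by apply/hasP; exists a; rewrite ?ta.
have aDp : a \in Dom (xjoin e eR) p by apply/DomP; exists a => //; exact: cnbhd_self.
have isIv : isI e eR (p ++ w :: q) v.
  rewrite /isI /S2 ell_prefix // -(ell_prefix (b :: q)) // hell.
  have [e1 _] := fp_prefix (w :: q) aDp; have [e2 _] := fp_prefix (b :: q) aDp.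
  by rewrite e1 -e2 hfa.
have mono : forall u, isI e eR (p ++ b :: q) u -> isI e eR (p ++ w :: q) u.
  move=> u; case: (eqVneq u v) => [->|uv]; first by rewrite isIv.
  case: (boolP (e v u)) => [evu|nevu]; first by rewrite noI.
  have tbu : tag b != u by apply: contraNneq nevu => <-.
  have twu : tag w != u by rewrite tw eq_sym.
  rewrite /isI /S2 -(ell_swap p q tbu twu).
  case hc: (ell (p ++ b :: q) u) => [c|] //; move/eqP => fc.
  have [cS tc] := ell_mem hc; apply/eqP.
  move: cS; rewrite mem_cat inE => /or3P[cp|/eqP cb|cq].
  - have cD : c \in Dom (xjoin e eR) p by apply/DomP; exists c => //; exact: cnbhd_self.
    have [e1 _] := fp_prefix (w :: q) cD; have [e2 _] := fp_prefix (b :: q) cD.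
    by rewrite e1 -e2 fc.
  - by move: tbu; rewrite -cb tc eqxx.
  - move: uS fc; case/splitPr: cq => q1 q2 uS fc.
    have cpre : c \notin p ++ b :: q1.
      by move: uS; rewrite -cat_cons catA uniq_catC /= mem_cat negb_or => /andP[/andP[_ ->]].
    have cnD : c \notin Dom (xjoin e eR) (p ++ b :: q1).
      by apply: (@fp_self_inv _ _ _ q2) cpre _; rewrite -catA.
    rewrite -cat_cons catA fp_self //.
    move: cnD; rewrite !Dom_cat !Dom_cons !in_setU !negb_or => /andP[-> /andP[_ ->]].
    rewrite XF1 tw tc //=; last by rewrite eq_sym.
    by rewrite nevu.
rewrite /Phi /S2 !count_cat /= tw isIv noI //.
have h := fun s => sub_count (fun x => mono (tag x)) s.
rewrite add0n add1n addnS ltnS; exact: leq_add.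
Qed.

From Stdlib Require Import Classical.
From mathcomp Require Import zify.

Lemma Phi_le (V : finType) (e : rel V) (T : V -> finType) (eR : forall v, rel (T v))
  (S : seq {v : V & T v}) : uniq S -> Phi e eR S <= #|{: {v : V & T v}}|.
Proof.
move=> u; apply: leq_trans (count_size _ _) _.
by rewrite -(card_uniqP u) max_card.
Qed.

Theorem lemma2 (V : finType) (e : rel V) (He : simple_graph e)
  (T : V -> finType) (eR : forall v, rel (T v))
  (HR : forall v, simple_graph (eR v))
  (S : seq {v : V & T v}) :
  grundy_seq (xjoin e eR) S ->
  exists S' : seq {v : V & T v},
    grundy_seq (xjoin e eR) S' /\
    forall (v : V) (a : {v : V & T v}),
      ell S' v = Some a ->
      footprinter (xjoin e eR) S' a = a ->
      (forall w : {v : V & T v}, tag w = v ->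
          tag (footprinter (xjoin e eR) S' w) = v) /\
      #|[set x in S' | tag x == v]| = gamma_gr (eR v).
Proof.
move=> hS.
have [n] := ubnP (#|{: {v : V & T v}}| - Phi e eR S).
elim: n S hS => // n IH S hS hn.
case: (classic (forall (v : V) (a : {v : V & T v}),
      ell S v = Some a ->
      footprinter (xjoin e eR) S a = a ->
      (forall w : {v : V & T v}, tag w = v ->
          tag (footprinter (xjoin e eR) S w) = v) /\
      #|[set x in S | tag x == v]| = gamma_gr (eR v))) => [H|H].
  by exists S.
have [v /not_all_ex_not [a H']] := not_all_ex_not _ _ H.
have [hell H''] := imply_to_and _ _ H'.
have [hfa hneg] := imply_to_and _ _ H''.
case: (classic (forall w : {v : V & T v}, tag w = v ->
          tag (footprinter (xjoin e eR) S w) = v)) => [hw|hw].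
  exfalso; apply: hneg; split; first exact: hw.
  exact: (case1 He hS hell hfa hw).
have [w hw0] := not_all_ex_not _ _ hw.
have [tw hw'] := imply_to_and _ _ hw0.
have [S2 [g2 lt]] := case2 He hS hell hfa tw (introN eqP hw').
apply: (IH S2 g2).
have u2 : uniq S2 by case: g2 => /and3P[].
move: (@Phi_le _ e _ eR S2 u2) lt hn; generalize (Phi e eR S2) (Phi e eR S) #|{: {v : V & T v}}| => x y z.
lia.
Qed.
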